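(* Let $T$ be a lifted graph, $F\colon T\to T$ a continuous sun-like map of degree 1, ${\cal P}$ a basic partition of $F$ and ${\cal G}$ its covering graph. If $\alpha\to\beta$ is an arrow in ${\cal G}$ and $A\in{\cal P}$ satisfies $\langle\alpha\rangle\subset A$, then $\langle\alpha\rangle$ positively $F$-covers $\langle\beta\rangle+p(A)$.
   Context: A lifted graph is a connected topological space $T$ with a homeomorphism $h\colon\mathbb R\to h(\mathbb R)\subset T$ and a homeomorphism $\tau\colon T\to T$ such that $\tau(h(x))=h(x+1)$, the closure of each connected component of $T\setminus h(\mathbb R)$ is a topological finite graph meeting $h(\mathbb R)$ in exactly one point, and only finitely many such components have closure meeting $h([0,1])$. Identify $h(\mathbb R)$ with $\mathbb R$, write $x+m:=\tau^m(x)$; $r_{\mathbb R}\colon T\to\mathbb R$ is the identity on $\mathbb R$ and maps a component $C$ of $T\setminus\mathbb R$ to the point $\overline C\cap\mathbb R$. $F$ has degree 1 if $F(x+1)=F(x)+1$. Let $T_{\mathbb R}:=\overline{\bigcup_{n\ge0}F^n(\mathbb R)}$, $X:=\overline{T\setminus T_{\mathbb R}}\cap r_{\mathbb R}^{-1}([0,1))$. $F$ is sun-like if $(T\setminus T_{\mathbb R})\cap r_{\mathbb R}^{-1}([0,1))$ consists of finitely many intervals with pairwise disjoint closures $X^i$, $i\in\Lambda$ (branches), each a compact interval meeting $T_{\mathbb R}$ in one endpoint $\min X^i$ (fixing the order of $X^i$). For $j\in\Lambda$, $r_j\colon T\to X^j$ is $r_j(x)=x$ for $x\in X^j$ and $r_j(x)=\min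 X^j$ otherwise. Positive covering: for nonempty compact intervals $I\subset X^i$, $J\subset X^j$, $n\ge1$ and $p\in\mathbb Z$, $I$ positively $F^n$-covers $J+p$ if there exist $x\le y$ in $I$ (order of $X^i$) with $r_j(F^n(x)-p)\le\min J$ and $\max J\le r_j(F^n(y)-p)$ (order of $X^j$). A basic partition is a finite family ${\cal P}=\{X^i_j\}$ of pairwise disjoint nonempty compact intervals $X^i_1<\dots<X^i_{N_i}$ in $X^i$, with $\ell(X^i_j)\in\Lambda$, $p(X^i_j)\in\mathbb Z$, such that $F(X^i_j)\subset(X^{\ell(X^i_j)}+p(X^i_j))\cup\mathrm{Int}(T_{\mathbb R})$, $F(\min X^i_j)=\min X^{\ell(X^i_j)}+p(X^i_j)$, and $F(X\setminus\bigcup X^i_j)\cap(X+\mathbb Z)=\emptyset$. For $A_0,\dots,A_n\in{\cal P}$, $\langle A_0\dots A_n\rangle:=F^n(\{x\in T: F^i(x)\in A_i+\mathbb Z,\ 0\le i\le n\})\cap X$. $A_0\dots A_n\sim B_0\dots B_m$ iff for some $k\le\min(n,m)$, $A_{n-i}=B_{m-i}$ ($0\le i\le k$) and $\langle A_0\dots A_{n-k}\rangle=A_{n-k}=B_{m-k}=\langle B_0\dots B_{m-k}\rangle$; then $\langle\cdot\rangle$ is well defined on classes. The covering graph ${\cal G}$: vertices are classes $A_0\dots A_n/\!\sim$ with $\langle A_0\dots A_n\rangle\ne\emptyset$; arrow $\alpha\to\beta$ iff $\alpha=A_0\dots A_n/\!\sim$, $\beta=A_0\dots A_nA_{n+1}/\!\sim$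 for some $A_i\in{\cal P}$. *)

(* Defs.v *)
From HB Require Import structures.
From mathcomp Require Import all_boot all_order all_algebra.
From mathcomp Require Import all_classical all_reals all_analysis.
Set Implicit Arguments. Unset Strict Implicit. Unset Printing Implicit Defensive.
Import Order.TTheory GRing.Theory Num.Theory.
Import numFieldNormedType.Exports.
Local Open Scope classical_set_scope.
Local Open Scope ring_scope.

Section LiftedGraphs.
Variables (R : realType) (T : topologicalType).

Definition I01 : set R := [set t | 0 <= t <= 1].
Definition Ioc01 : set R := [set t | 0 < t <= 1].

Definition embedding (h : R -> T) :=
  [/\ continuous h, injective h &
      forall U : set R, open U -> exists V : set T, open V /\ h @` U = V `&` range h].

Definition arc01 (g : R -> T) :=
  [/\ {within I01, continuous g}, {in I01 &, injective g} &
      forall U : set R, open U ->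
        exists V : set T, open V /\ g @` (U `&` I01) = V `&` g @` I01].

Definition finite_top_graph (G : set T) :=
  [/\ compact G, connected G,
      (forall x y, G x -> G y -> x <> y ->
         exists U V : set T, [/\ open U, open V, U x, V y & U `&` V `&` G = set0]) &
      exists (m : nat) (e : 'I_m -> R -> T),
        [/\ forall k, arc01 (e k),
            G = [set x | exists k, (e k @` I01) x] &
            forall k l, k != l -> forall x, (e k @` I01) x -> (e l @` I01) x ->
              (x = e k 0 \/ x = e k 1) /\ (x = e l 0 \/ x = e l 1)]].

Definition compo (h : R -> T) (x : T) := connected_component (~` range h) x.

Definition lifted_graph (h : R -> T) (tau tauinv : T -> T) :=
  [/\ connected [set: T] /\ embedding h,
      [/\ continuous tau, continuous tauinv, cancel tau tauinv & cancel tauinv tau],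
      (forall x, tau (h x) = h (x + 1)),
      (forall x, ~ range h x ->
         finite_top_graph (closure (compo h x)) /\
         exists y, closure (compo h x) `&` range h = [set y]) &
      finite_set [set C : set T | (exists x, ~ range h x /\ C = compo h x) /\
                                  closure C `&` (h @` I01) !=set0]].

(* r_R^{-1}([0,1)) *)
Definition rRpre01 (h : R -> T) : set T :=
  [set x | exists t, 0 <= t < 1 /\
     (x = h t \/ (~ range h x /\ closure (compo h x) (h t)))].

Definition shift (tau tauinv : T -> T) (m : int) (x : T) : T :=
  match m with Posz n => iter n tau x | Negz n => iter n.+1 tauinv x end.

Definition TR (F : T -> T) (h : R -> T) : set T :=
  closure [set y | exists n t, y = iter n F (h t)].

Definition Xset (F : T -> T) (h : R -> T) : set T :=
  closure (~` TR F h) `&` rRpre01 h.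

Definition XplusZ (tau tauinv : T -> T) (F : T -> T) (h : R -> T) : set T :=
  [set y | exists m x, Xset F h x /\ y = shift tau tauinv m x].

(* sun-like: branches X^i = phi i ([0,1]), i in the finite type L, ordered by
   the parameter, min X^i = phi i 0. *)
Definition sun_like (F : T -> T) (h : R -> T) (L : finType) (phi : L -> R -> T) :=
  [/\ (forall i, arc01 (phi i)) /\ (forall i, TR F h (phi i 0)),
      forall i t, Ioc01 t -> ~ TR F h (phi i t),
      forall i, closure (phi i @` Ioc01) = phi i @` I01,
      forall i j, i != j -> phi i @` I01 `&` phi j @` I01 = set0 &
      (~` TR F h) `&` rRpre01 h = [set x | exists i, (phi i @` Ioc01) x]].

(* parameter of r_j(x) in X^j = phi j ([0,1]) *)
Definition rpar (L : finType) (phi : L -> R -> T) (j : L) (x : T) : R :=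
  xget 0 [set t | I01 t /\ phi j t = x].

(* I = phi i ([a,b]) positively F^n-covers J + p, with J = phi j ([c,d]) *)
Definition pos_covers (tau tauinv : T -> T) (F : T -> T) (L : finType)
  (phi : L -> R -> T) (n : nat) (i : L) (a b : R) (j : L) (c d : R) (p : int) :=
  exists s u, [/\ a <= s, s <= u, u <= b,
    rpar phi j (shift tau tauinv (- p) (iter n F (phi i s))) <= c &
    d <= rpar phi j (shift tau tauinv (- p) (iter n F (phi i u)))].

(* the element k of the basic partition: X^{pb k}_. = phi (pb k) ([pa k, pc k]) *)
Definition Pset (L K : finType) (phi : L -> R -> T) (pb : K -> L) (pa pc : K -> R)
  (k : K) : set T := phi (pb k) @` [set t | pa k <= t <= pc k].

Definition basic_partition (tau tauinv : T -> T) (F : T -> T) (h : R -> T)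
  (L K : finType) (phi : L -> R -> T) (pb : K -> L) (pa pc : K -> R)
  (pl : K -> L) (pp : K -> int) :=
  [/\ forall k, 0 <= pa k /\ pa k <= pc k /\ pc k <= 1,
      forall k k', k != k' -> Pset phi pb pa pc k `&` Pset phi pb pa pc k' = set0,
      forall k, F @` Pset phi pb pa pc k `<=`
                (shift tau tauinv (pp k) @` (phi (pl k) @` I01)) `|` interior (TR F h),
      forall k, F (phi (pb k) (pa k)) = shift tau tauinv (pp k) (phi (pl k) 0) &
      F @` (Xset F h `\` [set x | exists k, Pset phi pb pa pc k x])
        `&` XplusZ tau tauinv F h = set0].

Definition angle (tau tauinv : T -> T) (F : T -> T) (h : R -> T)
  (L K : finType) (phi : L -> R -> T) (pb : K -> L) (pa pc : K -> R)
  (s : nat -> K) (n : nat) : set T :=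
  (iter n F @` [set x | forall i, (i <= n)%N ->
      exists m y, Pset phi pb pa pc (s i) y /\ iter i F x = shift tau tauinv m y])
  `&` Xset F h.

End LiftedGraphs.

(* Main.v *)
Require Import Defs.
From HB Require Import structures.
From mathcomp Require Import all_boot all_order all_algebra.
From mathcomp Require Import all_classical all_reals all_analysis.
From mathcomp Require Import zify lra finmap.
Import Order.TTheory GRing.Theory Num.Theory.
Import numFieldNormedType.Exports.
Set Implicit Arguments. Unset Strict Implicit. Unset Printing Implicit Defensive.
Local Open Scope classical_set_scope.
Local Open Scope ring_scope.

Section Shift.
Variables (R : realType) (T : topologicalType) (h : R -> T) (tau tauinv F : T -> T).
Hypotheses (tauK : cancel tau tauinv) (tauinvK : cancel tauinv tau)
  (Ftau : forall x, F (tau x) = tau (F x)).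
Local Notation shf := (@Defs.shift T tau tauinv).

Lemma Ftauinv x : F (tauinv x) = tauinv (F x).
Proof. by apply: (can_inj tauK); rewrite -Ftau !tauinvK. Qed.

Lemma sh0 x : shf 0 x = x. Proof. by []. Qed.

Lemma shS m x : shf (m + 1) x = tau (shf m x).
Proof.
case: m => [n|[|n]].
- by have -> : Posz n + 1 = Posz n.+1 by rewrite -addn1 PoszD.
- by rewrite /= tauinvK.
- have -> : Negz n.+1 + 1 = Negz n by rewrite !NegzE; lia.
  by rewrite /= tauinvK.
Qed.

Lemma shN m x : shf (m - 1) x = tauinv (shf m x).
Proof. by rewrite -[in RHS](subrK 1 m) shS tauK. Qed.

Lemma shD m k x : shf m (shf k x) = shf (m + k) x.
Proof.
elim/int_rect: m => [|n IH|n IH]; first by rewrite add0r.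
- have -> : (n.+1)%:Z = n%:Z + 1 by rewrite -addn1 PoszD.
  by rewrite shS IH -shS addrAC.
- have -> : - (n.+1)%:Z = - n%:Z - 1 by rewrite -addn1 PoszD opprD.
  by rewrite shN IH -shN addrAC.
Qed.

Lemma shK m x : shf (- m) (shf m x) = x.
Proof. by rewrite shD addNr. Qed.

Lemma shKV m x : shf m (shf (- m) x) = x.
Proof. by rewrite shD addrN. Qed.

Lemma Fsh m x : F (shf m x) = shf m (F x).
Proof.
elim/int_rect: m x => [|n IH|n IH] x //.
- have -> : (n.+1)%:Z = n%:Z + 1 by rewrite -addn1 PoszD.
  by rewrite !shS Ftau IH.
- have -> : - (n.+1)%:Z = - n%:Z - 1 by rewrite -addn1 PoszD opprD.
  by rewrite !shN Ftauinv IH.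
Qed.

Lemma iterFsh k m x : iter k F (shf m x) = shf m (iter k F x).
Proof. by elim: k => //= k ->; rewrite Fsh. Qed.

Hypothesis tauh : forall x, tau (h x) = h (x + 1).
Lemma tauinvh x : tauinv (h x) = h (x - 1).
Proof. by rewrite -{1}(subrK 1 x) -tauh tauK. Qed.

Lemma shh m x : shf m (h x) = h (x + m%:~R).
Proof.
elim/int_rect: m x => [|n IH|n IH] x; first by rewrite addr0.
- have -> : (n.+1)%:Z = n%:Z + 1 by rewrite -addn1 PoszD.
  by rewrite shS IH tauh rmorphD /= addrA.
- have -> : - (n.+1)%:Z = - n%:Z - 1 by rewrite -addn1 PoszD opprD.
  by rewrite shN IH tauinvh rmorphB /= addrA.
Qed.

Hypotheses (ctau : continuous tau) (ctauinv : continuous tauinv).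
Lemma csh m : continuous (shf m).
Proof.
elim/int_rect: m => [|n IH|n IH].
- by move=> x; exact: cvg_id.
- have -> : (n.+1)%:Z = n%:Z + 1 by rewrite -addn1 PoszD.
  have -> : shf (n%:Z + 1) = tau \o shf n by apply: funext => x; rewrite shS.
  by move=> x; apply: continuous_comp; [exact: IH|exact: ctau].
- have -> : - (n.+1)%:Z = - n%:Z - 1 by rewrite -addn1 PoszD opprD.
  have -> : shf (- n%:Z - 1) = tauinv \o shf (- n%:Z) by apply: funext => x; rewrite shN.
  by move=> x; apply: continuous_comp; [exact: IH|exact: ctauinv].
Qed.

End Shift.
Section Topo.
Variable (T : topologicalType).

Lemma cl_img (f : T -> T) (A : set T) x :
  continuous f -> closure A x -> closure (f @` A) (f x).
Proof.
move=> cf clA B nB.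
have : nbhs x (f @^-1` B) by exact: cf.
move=> /clA [y [Ay By]]; exists (f y); split => //; exists y.
Qed.

Lemma cl_inv (f : T -> T) (A : set T) x :
  continuous f -> (forall y, A y -> A (f y)) -> closure A x -> closure A (f x).
Proof.
move=> cf fA /(cl_img cf); apply: closureS => _ [y Ay <-]; exact: fA.
Qed.

Lemma cl_int (A B : set T) x : closure A x -> interior B x -> exists y, A y /\ B y.
Proof. by move=> clA iB; have [y [Ay By]] := clA _ iB; exists y. Qed.

Lemma compo_img (f : T -> T) (S : set T) x :
  continuous f -> S x -> (forall y, S y -> S (f y)) ->
  f @` connected_component S x `<=` connected_component S (f x).
Proof.
move=> cf Sx fS; apply: connected_component_max.
- by exists x => //; exact: connected_component_refl.
- by move=> _ [y /connected_component_sub Sy <-]; exact: fS.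
- apply: connected_continuous_connected; first exact: component_connected.
  exact: continuous_subspaceT.
Qed.
End Topo.

Section Att.
Variables (R : realType) (T : topologicalType) (h : R -> T).
Definition Att (x : T) (u : R) :=
  x = h u \/ (~ range h x /\ closure (compo h x) (h u)).

Lemma Att_map (f g : T -> T) (c : R) x u :
  continuous f -> cancel f g -> (forall v, f (h v) = h (v + c)) ->
  Att x u -> Att (f x) (u + c).
Proof.
move=> cf fK fh [->|[nx clx]]; first by left; rewrite fh.
have ginv v : g (h v) = h (v - c) by rewrite -{1}(subrK c v) -fh fK.
have nfx : forall y, ~ range h y -> ~ range h (f y).
  by move=> y ny [v _ ev]; apply: ny; exists (v - c) => //; rewrite -ginv ev fK.
right; split; first exact: nfx.
rewrite -fh; have := cl_img cf clx; apply: closureS.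
apply: compo_img => //.
Qed.
End Att.

Section Main.
Variables (R : realType) (T : topologicalType) (h : R -> T)
  (tau tauinv F : T -> T) (L : finType) (phi : L -> R -> T)
  (K : finType) (pb : K -> L) (pa pc : K -> R) (pl : K -> L) (pp : K -> int).
Hypotheses (hinj : injective h) (tauK : cancel tau tauinv) (tauinvK : cancel tauinv tau)
  (ctau : continuous tau) (ctauinv : continuous tauinv)
  (tauh : forall x, tau (h x) = h (x + 1))
  (hcomp : forall x, ~ range h x -> exists y, closure (compo h x) `&` range h = [set y])
  (cF : continuous F) (Ftau : forall x, F (tau x) = tau (F x)).
Hypotheses (arc : forall i, arc01 (phi i)) (phi0TR : forall i, TR F h (phi i 0))
  (phiNTR : forall i t, @Ioc01 R t -> ~ TR F h (phi i t))
  (phicl : forall i, closure (phi i @` @Ioc01 R) = phi i @` @I01 R)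
  (phidisj : forall i j, i != j -> phi i @` @I01 R `&` phi j @` @I01 R = set0)
  (sunX : (~` TR F h) `&` rRpre01 h = [set x | exists i, (phi i @` @Ioc01 R) x]).

Local Notation sh := (@Defs.shift T tau tauinv).

Lemma Att_sh x u m : Att h x u -> Att h (sh m x) (u + m%:~R).
Proof.
elim/int_rect: m x u => [|n IH|n IH] x u Hx; first by rewrite addr0.
- have -> : (n.+1)%:Z = n%:Z + 1 by rewrite -addn1 PoszD.
  rewrite shS // rmorphD /= addrA.
  by apply: (Att_map ctau tauK tauh); exact: IH.
- have -> : - (n.+1)%:Z = - n%:Z - 1 by rewrite -addn1 PoszD opprD.
  rewrite shN // rmorphB /= addrA.
  apply: (Att_map ctauinv tauinvK (tauinvh tauK tauh)); exact: IH.
Qed.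

Lemma Att_uniq x u v : Att h x u -> Att h x v -> u = v.
Proof.
move=> [->|[nx cu]] [e|[nx' cv]].
- exact: hinj.
- by exfalso; apply: nx'; exists u.
- by exfalso; apply: nx; exists v.
- have [y Hy] := hcomp nx.
  have : (closure (compo h x) `&` range h) (h u) by split => //; exists u.
  have : (closure (compo h x) `&` range h) (h v) by split => //; exists v.
  by rewrite Hy => <- /hinj.
Qed.

Lemma int_small (m : int) : -1 < m%:~R :> R -> m%:~R < 1 :> R -> m = 0.
Proof.
have -> : -1 = (-1)%:~R :> R by rewrite rmorphN /= rmorph1.
have -> : 1 = 1%:~R :> R by rewrite rmorph1.
rewrite !ltr_int => H1 H2; lia.
Qed.

Lemma rR_sh x m : rRpre01 h x -> rRpre01 h (sh m x) -> m = 0.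
Proof.
move=> [u [/andP[u0 u1] Au]] [v [/andP[v0 v1] Av]].
have := Att_uniq (Att_sh m Au) Av => e.
apply: int_small; lra.
Qed.

Lemma rR_eq x y m : rRpre01 h x -> rRpre01 h y -> y = sh m x -> y = x /\ m = 0.
Proof. by move=> rx ry e; have m0 := rR_sh rx (eq_ind _ _ ry _ e); subst; split. Qed.


Lemma TR_sh m x : TR F h x -> TR F h (sh m x).
Proof.
apply: cl_inv; first exact: csh.
move=> _ [n [t ->]]; exists n, (t + m%:~R).
by rewrite -iterFsh // shh.
Qed.

Lemma TR_shE m x : TR F h (sh m x) <-> TR F h x.
Proof. by split; [move/(@TR_sh (- m)); rewrite shK|exact: TR_sh]. Qed.

Lemma NTR_sh m x : closure (~` TR F h) x -> closure (~` TR F h) (sh m x).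
Proof.
apply: cl_inv; first exact: csh.
by move=> y ny /TR_shE.
Qed.

Lemma rangeTR x : range h x -> TR F h x.
Proof. by move=> [t _ <-]; apply: subset_closure; exists 0%N, t. Qed.

Lemma phiNrange i t : @Ioc01 R t -> ~ range h (phi i t).
Proof. by move=> t01 /rangeTR; apply: phiNTR. Qed.

Lemma phi_cont i : {within @I01 R, continuous phi i}.
Proof. by case: (arc i). Qed.

Lemma phi_inj i u v : @I01 R u -> @I01 R v -> phi i u = phi i v -> u = v.
Proof.
case: (arc i) => _ inj _ Iu Iv; apply: inj; exact: mem_set.
Qed.

Lemma rpar_phi j v : @I01 R v -> rpar phi j (phi j v) = v.
Proof.
move=> Iv; apply: xget_unique; first by split.
by move=> y [Iy /phi_inj]; apply.
Qed.

Lemma phiTR0 i t : @I01 R t -> TR F h (phi i t) -> t = 0.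
Proof.
move=> /andP[t0 t1] TRt; apply/eqP; rewrite eq_le t0 andbT.
rewrite leNgt; apply/negP => tp; apply: (phiNTR (i := i) (t := t)) => //.
by rewrite /Ioc01 /= tp.
Qed.

Lemma Ioc01_rR i t : @Ioc01 R t -> rRpre01 h (phi i t).
Proof.
move=> It; have : ((~` TR F h) `&` rRpre01 h) (phi i t).
  by rewrite sunX; exists i; exists t.
by case.
Qed.

Lemma Ioc01_conn : connected (@Ioc01 R).
Proof.
apply/connected_intervalP => x y /andP[x0 _] /andP[_ y1] z /andP[xz zy].
apply/andP; split; lra.
Qed.

Lemma I01_conn : connected (@I01 R).
Proof.
apply/connected_intervalP => x y /andP[x0 _] /andP[_ y1] z /andP[xz zy].
apply/andP; split; lra.
Qed.

Lemma phi_rR i t : @I01 R t -> rRpre01 h (phi i t).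
Proof.
move=> It; have [t0|tp] := eqVneq t 0; last first.
  apply: Ioc01_rR; move: It => /andP[? ?]; apply/andP; split => //.
  by rewrite lt_neqAle eq_sym tp.
subst t.
have I1 : @Ioc01 R 1 by apply/andP; split; [exact: ltr01|exact: lexx].
have [u [u01 Au]] := Ioc01_rR i I1.
case: Au => [e1|[nr1 cu]]; first by exfalso; apply: (@phiNrange i 1 I1); exists u => //; rewrite e1.
have Bsub : phi i @` @Ioc01 R `<=` compo h (phi i 1).
  apply: connected_component_max; first by exists 1.
    by move=> _ [t Ht <-]; apply: phiNrange.
  apply: connected_continuous_connected; first exact: Ioc01_conn.
  apply: continuous_subspaceW; last exact: phi_cont.
  by move=> t /andP[t0 t1]; apply/andP; split => //; apply: ltW.
have c0 : closure (phi i @` @Ioc01 R) (phi i 0).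
  by rewrite phicl; exists 0 => //; rewrite /I01 /= lexx ler01.
exists u; split => //.
case: (pselect (range h (phi i 0))) => [[v _ ev]|nr].
  left; have cv : closure (compo h (phi i 1)) (h v).
    by rewrite ev; apply: closureS Bsub _ c0.
  have [y Hy] := hcomp nr1.
  have : (closure (compo h (phi i 1)) `&` range h) (h v) by split => //; exists v.
  have : (closure (compo h (phi i 1)) `&` range h) (h u) by split => //; exists u.
  by rewrite Hy -ev => <-.
right; split => //.
have e : compo h (phi i 1) = compo h (phi i 0).
  apply: same_connected_component.
  have : (phi i @` @I01 R) `<=` compo h (phi i 1).
    apply: connected_component_max; first by exists 1 => //; rewrite /I01 /= ler01 lexx.
      move=> _ [t Ht <-]; have [->|tp] := eqVneq t 0; first exact: nr.
      apply: phiNrange; move: Ht => /andP[? ?]; apply/andP; split => //.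
      by rewrite lt_neqAle eq_sym tp.
    apply: connected_continuous_connected; first exact: I01_conn.
    exact: phi_cont.
  by apply; exists 0 => //; rewrite /I01 /= lexx ler01.
by rewrite -e.
Qed.

Lemma phi_X i t : @I01 R t -> Xset F h (phi i t).
Proof.
move=> It; split; last exact: phi_rR.
have : closure (phi i @` @Ioc01 R) (phi i t) by rewrite phicl; exists t.
apply: closureS => _ [u Iu <-]; exact: phiNTR.
Qed.



Hypotheses
  (bp1 : forall k, 0 <= pa k /\ pa k <= pc k /\ pc k <= 1)
  (bp2 : forall k k', k != k' -> Pset phi pb pa pc k `&` Pset phi pb pa pc k' = set0)
  (bp3 : forall k, F @` Pset phi pb pa pc k `<=`
                (sh (pp k) @` (phi (pl k) @` @I01 R)) `|` interior (TR F h))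
  (bp4 : forall k, F (phi (pb k) (pa k)) = sh (pp k) (phi (pl k) 0)).

Local Notation P := (Pset phi pb pa pc).
Local Notation ang s := (angle tau tauinv F h phi pb pa pc s).

Lemma P_I01 k t : pa k <= t <= pc k -> @I01 R t.
Proof.
move=> /andP[h1 h2]; have [? [? ?]] := bp1 k.
apply/andP; split; [exact: le_trans h1|exact: le_trans h2 _].
Qed.

Lemma P_X k y : P k y -> Xset F h y.
Proof. by move=> [t Ht <-]; apply: phi_X; apply: P_I01 Ht. Qed.

Lemma ang_sub s k w : ang s k w -> P (s k) w.
Proof.
move=> [[x Hx ex] Xw].
have [m [y [Py ey]]] := Hx k (leqnn k).
rewrite -ex ey in Xw *.
by have [-> _] := rR_eq (P_X Py).2 Xw.2 erefl.
Qed.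

Lemma ang_down s k w : ang s k.+1 w ->
  exists y m, ang s k y /\ w = sh m (F y).
Proof.
move=> [[x Hx ex] Xw].
have [m [y [Py ey]]] := Hx k (leqnSn k).
exists y, m; split; last by rewrite -ex /= ey Fsh.
split; last exact: P_X Py.
exists (sh (- m) x); last by rewrite iterFsh // ey shK.
move=> i ik; have [m1 [y1 [Py1 e1]]] := Hx i (leqW ik).
by exists (- m + m1), y1; split => //; rewrite iterFsh // e1 shD.
Qed.

Lemma ang_up s k y p z : ang s k y -> F y = sh p z -> P (s k.+1) z ->
  ang s k.+1 z.
Proof.
move=> [[x Hx ex] Xy] eF Pz; split; last exact: P_X Pz.
exists (sh (- p) x); last by rewrite iterFsh //= ex eF shK.
move=> i; rewrite leq_eqVlt => /orP[/eqP ->|ik].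
  by exists 0, z; split => //; rewrite iterFsh //= ex eF shK.
have [m1 [y1 [Py1 e1]]] := Hx i ik.
by exists (- p + m1), y1; split => //; rewrite iterFsh // e1 shD.
Qed.

Lemma ang0 s : ang s 0 = P (s 0).
Proof.
apply/seteqP; split => [w|y Py]; first exact: ang_sub.
split; last exact: P_X Py.
exists y => //; move=> i; rewrite leqn0 => /eqP ->.
by exists 0, y.
Qed.


Lemma arcV l (U : set R) : open U ->
  exists V : set T, open V /\ forall w, @I01 R w -> (V (phi l w) <-> U w).
Proof.
move=> oU; case: (arc l) => _ _ H3; have [V [oV e]] := H3 U oU.
exists V; split => // w Iw; split.
- move=> Vw; have : (V `&` phi l @` @I01 R) (phi l w) by split => //; exists w.
  rewrite -e => -[w1 [Uw1 Iw1] /phi_inj ew].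
  by rewrite -ew.
- move=> Uw; have : (phi l @` (U `&` @I01 R)) (phi l w) by exists w.
  by rewrite e => -[].
Qed.

Lemma open_nbhs_at (A : set T) z : open A -> A z -> nbhs z A.
Proof. by rewrite openE => oA Az; apply: oA. Qed.

Lemma open_shpre m (V : set T) : open V -> open (sh m @^-1` V).
Proof. by move=> oV; apply: open_comp => // x _; exact: csh. Qed.

Lemma openNTR : open (~` TR F h).
Proof. by apply: closed_openC; exact: closed_closure. Qed.

Lemma Qdown (g : R -> T) (a b : R) (p : int) (l : L) u v :
  {within [set t | a <= t <= b], continuous g} ->
  (forall t, a <= t <= b ->
     (exists w, @I01 R w /\ g t = sh p (phi l w)) \/ interior (TR F h) (g t)) ->
  g a = sh p (phi l 0) ->
  @I01 R u -> (exists t, a <= t <= b /\ g t = sh p (phi l u)) ->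
  0 < v -> v < u ->
  exists t, a <= t <= b /\ g t = sh p (phi l v).
Proof.
move=> gc gcase ga Iu [t1 [/andP[at1 t1b] gt1]] v0 vu.
apply: contrapT => nQ.
have I0 : @I01 R 0 by apply/andP; split; [exact: lexx|exact: ler01].
have [V1 [oV1 eV1]] := arcV l (@open_lt _ v).
have [V2 [oV2 eV2]] := arcV l (@open_gt _ v).
pose O1 := interior (TR F h) `|` sh (- p) @^-1` V1.
pose O2 := ~` TR F h `&` sh (- p) @^-1` V2.
have oO1 : open O1 by apply: openU; [exact: open_interior|exact: open_shpre].
have oO2 : open O2 by apply: openI; [exact: openNTR|exact: open_shpre].
pose C := g @` [set t | a <= t <= t1].
have Cc : connected C.
  apply: connected_continuous_connected.
    apply/connected_intervalP => x y /andP[x0 _] /andP[_ y1] z /andP[xz zy].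
    apply/andP; split; [exact: le_trans xz|exact: le_trans zy _].
  apply: continuous_subspaceW gc => t /andP[? ?]; apply/andP; split => //.
  exact: le_trans t1b.
have tab t : a <= t <= t1 -> a <= t <= b.
  by move=> /andP[? ?]; apply/andP; split => //; exact: le_trans t1b.
have key z : C z -> O1 z -> O2 z -> False.
  move=> [t /tab tI <-] O1z [nT V2z].
  case: O1z => [/interior_subset //|V1z].
  case: (gcase t tI) => [[w [Iw ew]]|/interior_subset //].
  move: V1z V2z; rewrite /preimage /= ew !shK // => V1z V2z.
  have := (eV1 w Iw).1 V1z; have := (eV2 w Iw).1 V2z => /= h1 h2.
  by move: (lt_trans h1 h2); rewrite ltxx.
have sep : separated (C `&` O1) (C `&` O2).
  split; apply/seteqP; split => // z.
  - move=> [cz [Cz O2z]]; have [y [[Cy O1y] O2y]] := cz _ (open_nbhs_at oO2 O2z).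
    exact: (key y).
  - move=> [[Cz O1z] cz]; have [y [[Cy O2y] O1y]] := cz _ (open_nbhs_at oO1 O1z).
    exact: (key y).
have cov : C `<=` (C `&` O1) `|` (C `&` O2).
  move=> z Cz; case: (Cz) => t /tab tI ez.
  case: (gcase t tI) => [[w [Iw ew]]|iT]; last by left; split => //; left; rewrite -ez.
  have [wv|vw|wv] := ltgtP w v.
  - left; split => //; right; rewrite /preimage /= -ez ew shK //.
    exact: (eV1 w Iw).2.
  - right; split => //; split; rewrite -ez ew.
    + move/TR_shE => /(phiTR0 Iw) w0.
      by move: (lt_trans v0 vw); rewrite w0 ltxx.
    + by rewrite /preimage /= shK //; exact: (eV2 w Iw).2.
  - by exfalso; apply: nQ; exists t; split => //; rewrite -wv.
have at1' : a <= a <= t1 by rewrite lexx at1.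
have t1t1 : a <= t1 <= t1 by rewrite lexx at1.
case: (connected_subset sep cov Cc) => sub.
- have [_ []] := sub (g t1) (ex_intro2 _ _ t1 t1t1 erefl).
  + rewrite gt1 => /interior_subset /TR_shE /(phiTR0 Iu) u0.
    by move: (lt_trans v0 vu); rewrite u0 ltxx.
  + rewrite /preimage /= gt1 shK // => /(eV1 u Iu) /= uv.
    by move: (lt_trans uv vu); rewrite ltxx.
- have [_ [_]] := sub (g a) (ex_intro2 _ _ a at1' erefl).
  rewrite /preimage /= ga shK // => /(eV2 0 I0) /= v0'.
  by move: (lt_trans v0 v0'); rewrite ltxx.
Qed.

Lemma within_pt (g : R -> T) (A : set R) t N :
  {within A, continuous g} -> A t -> nbhs (g t) N -> nbhs t [set t' | A t' -> N (g t')].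
Proof.
move=> gc At Nn; have := gc t N Nn.
by case: (nbhs_subspaceP A t).
Qed.

Lemma Qsup (g : R -> T) (a b : R) (p : int) (l : L) :
  {within [set t | a <= t <= b], continuous g} ->
  (forall t, a <= t <= b ->
     (exists w, @I01 R w /\ g t = sh p (phi l w)) \/ interior (TR F h) (g t)) ->
  a <= b -> g a = sh p (phi l 0) ->
  exists sg, (@I01 R sg /\ exists t, a <= t <= b /\ g t = sh p (phi l sg)) /\
    forall v, (@I01 R v /\ exists t, a <= t <= b /\ g t = sh p (phi l v)) -> v <= sg.
Proof.
move=> gc gcase ab ga.
pose Q v := @I01 R v /\ exists t, a <= t <= b /\ g t = sh p (phi l v).
have I0 : @I01 R 0 by apply/andP; split; [exact: lexx|exact: ler01].
have Q0 : Q 0 by split => //; exists a; rewrite lexx ab.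
have hs : has_sup Q.
  by split; [exists 0|exists 1 => v [/andP[_ v1] _]].
exists (sup Q); split; last by move=> v Qv; exact: sup_upper_bound hs _ Qv.
apply: contrapT => nQs.
have ub v : Q v -> v <= sup Q by move=> Qv; exact: sup_upper_bound hs _ Qv.
have Qlt v : Q v -> v < sup Q.
  move=> Qv; rewrite lt_neqAle ub // andbT; apply/eqP => ev.
  by apply: nQs; rewrite -ev.
have sg0 : 0 < sup Q by exact: Qlt.
have big (s : seq R) : (forall u, u \in s -> u < sup Q) ->
    exists w, Q w /\ forall u, u \in s -> u < w.
  elim: s => [|x s IH] H; first by exists 0; split.
  have H' : forall u, u \in s -> u < sup Q by move=> u us; apply: H; rewrite in_cons us orbT.
  have [w1 [Qw1 Hw1]] := IH H'.
  have [y Qy xy] := sup_gt (ex_intro _ 0 Q0) (H x (mem_head x s)).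
  have [w1y|yw1] := lerP w1 y.
  - exists y; split => // u; rewrite in_cons => /orP[/eqP -> //|us].
    exact: lt_le_trans (Hw1 u us) w1y.
  - exists w1; split => // u; rewrite in_cons => /orP[/eqP -> |us].
      exact: lt_trans xy yw1.
    exact: Hw1.
have [Vf HV] := @choice R (set T)
  (fun u V => open V /\ forall w, @I01 R w -> (V (phi l w) <-> w < u))
  (fun u => arcV l (@open_lt _ u)).
pose f u := interior (TR F h) `|` sh (- p) @^-1` Vf u.
pose D := [set u : R | 0 < u < sup Q].
pose W u := interior [set t' | a <= t' <= b -> f u (g t')].
have fo u : open (f u).
  apply: openU; first exact: open_interior.
  exact: open_shpre (HV u).1.
have Icomp : compact [set t : R | a <= t <= b].
  by rewrite -set_itvcc; exact: segment_compact.
move: Icomp; rewrite compact_cover => /(_ R D W) [].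
- by move=> u _; exact: open_interior.
- move=> t tI.
  suff [u Du fu] : exists2 u, D u & f u (g t).
    by exists u => //; apply: within_pt gc tI (open_nbhs_at (fo u) fu).
  case: (gcase t tI) => [[w [Iw ew]]|iT].
  + have Qw : Q w by split => //; exists t.
    have wlt := Qlt w Qw.
    have w0 : 0 <= w by case/andP: Iw.
    exists ((w + sup Q) / 2).
      by rewrite /D /=; apply/andP; split; lra.
    right; rewrite /preimage /= ew shK //; apply/(HV _).2 => //; lra.
  + exists (sup Q / 2); first by rewrite /D /=; apply/andP; split; lra.
    by left.
move=> D' subD covD.
have Hs : forall u, u \in 0 :: enum_fset D' -> u < sup Q.
  move=> u; rewrite in_cons => /orP[/eqP -> //|uD].
  by have := subD u uD; rewrite in_setE => /andP[].
have [w [Qw Hw]] := big _ Hs.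
have [Iw [t [tI ew]]] := Qw.
have w0 : 0 < w by apply: Hw; exact: mem_head.
have [u uD /nbhs_singleton /(_ tI) fu] := covD t tI.
case: fu.
- rewrite ew => /interior_subset /TR_shE /(phiTR0 Iw) e0.
  by move: w0; rewrite e0 ltxx.
- rewrite /preimage /= ew shK // => /((HV u).2 w Iw) wu.
  have := Hw u; rewrite in_cons uD orbT => /(_ isT) uw.
  by move: (lt_trans wu uw); rewrite ltxx.
Qed.

Lemma step s k b : pa (s k) <= b <= pc (s k) ->
  ang s k = phi (pb (s k)) @` [set t | pa (s k) <= t <= b] ->
  ang s k.+1 !=set0 ->
  exists d, [/\ pa (s k.+1) <= d <= pc (s k.+1),
     ang s k.+1 = phi (pb (s k.+1)) @` [set t | pa (s k.+1) <= t <= d] &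
     pos_covers tau tauinv F phi 1 (pb (s k)) (pa (s k)) b (pb (s k.+1))
       (pa (s k.+1)) d (pp (s k))].
Proof.
move=> /andP[ab bpc] eang [w0 Hw0].
pose A := s k; pose i := pb A; pose a := pa A; pose p := pp A; pose l := pl A.
pose g t := F (phi i t).
have sub : [set t | a <= t <= b] `<=` @I01 R.
  by move=> t /andP[h1 h2]; apply: (@P_I01 A); apply/andP; split => //; exact: le_trans h2 bpc.
have gc : {within [set t | a <= t <= b], continuous g}.
  move=> t; apply: continuous_comp; last exact: cF.
  exact: (continuous_subspaceW sub (@phi_cont i)).
have gcase t : a <= t <= b ->
    (exists w, @I01 R w /\ g t = sh p (phi l w)) \/ interior (TR F h) (g t).
  move=> /andP[h1 h2].
  have : (F @` P A) (g t) by exists (phi i t) => //; exists t => //; apply/andP; split => //; exact: le_trans h2 bpc.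
  case/bp3 => [[z [w Iw <-] ez]|iT]; last by right.
  by left; exists w; split.
have ga : g a = sh p (phi l 0) by exact: bp4.
have [sg [[Isg [ts [tsI gts]]] sgmax]] := Qsup gc gcase ab ga.
pose Q v := @I01 R v /\ exists t, a <= t <= b /\ g t = sh p (phi l v).
have QE v : Q v <-> 0 <= v <= sg.
  split => [Qv|/andP[v0 vsg]].
    by case: (Qv) => /andP[v0 _] _; rewrite v0 /=; exact: sgmax Qv.
  have Iv : @I01 R v by case/andP: Isg => _ s1; apply/andP; split => //; exact: le_trans vsg s1.
  split => //.
  have [->|vp] := eqVneq v 0.
    by exists a; split => //; apply/andP; split => //; exact: lexx.
  have [->|vs] := eqVneq v sg; first by exists ts.
  apply: (Qdown gc gcase ga Isg (ex_intro _ ts (conj tsI gts))).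
  - by rewrite lt_neqAle eq_sym vp.
  - by rewrite lt_neqAle vs.
have angE w : ang s k.+1 w <-> (exists v, Q v /\ w = phi l v) /\ P (s k.+1) w.
  split => [Hw|[[v [[Iv [t [tI gt]]] ->]] Pw]]; last first.
    apply: (@ang_up s k (phi i t) p) => //.
    by rewrite eang; exists t.
  split; last exact: ang_sub.
  have [y [m [angy ew]]] := ang_down Hw.
  move: (angy); rewrite eang => -[t tI ey].
  case: (gcase t tI) => [[v [Iv ev]]|iT].
    have Xw : Xset F h w by case: Hw.
    rewrite /g ey in ev; rewrite ev shD // in ew.
    have [e _] := rR_eq (phi_rR l Iv) Xw.2 ew.
    by exists v; split => //; split => //; exists t; rewrite /g ey.
  exfalso; have [Xw1 _] : Xset F h w by case: Hw.
  have := @NTR_sh (- m) _ Xw1; rewrite ew shK // -ey => cl.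
  by have [z [nz tz]] := cl_int cl iT.
have [[v0 [Qv0 ew0]] [t0 /andP[pt0 t0p] e0]] := (angE w0).1 Hw0.
have I0 : @I01 R t0 by apply: (@P_I01 (s k.+1)); rewrite pt0 t0p.
have Iv0 : @I01 R v0 by case: Qv0.
have jl : pb (s k.+1) = l.
  apply/eqP; apply: contrapT => /negP njl.
  have := phidisj njl; rewrite -subset0 => /(_ w0); apply.
  by split; [exists t0|exists v0].
rewrite jl in e0 *.
have vt : v0 = t0 by apply: (@phi_inj l _ _ Iv0 I0); rewrite -ew0 e0.
have /andP[_ t0sg] : 0 <= t0 <= sg by apply/(QE t0); rewrite -vt.
have [pa0 [pac pc1]] := bp1 (s k.+1).
exists (Order.min sg (pc (s k.+1))); split.
- by rewrite le_min (le_trans pt0 t0sg) pac /= ge_min lexx orbT.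
- apply/seteqP; split => [w Hw|_ [t /andP[pt td] <-]].
    have [[v [Qv ->]] [t' /andP[pt' tp'] et']] := (angE w).1 Hw.
    rewrite jl in et'.
    have It' : @I01 R t' by apply: (@P_I01 (s k.+1)); rewrite pt' tp'.
    have Iv : @I01 R v by case: Qv.
    have vt' : v = t' by apply: (@phi_inj l _ _ Iv It'); rewrite et'.
    have /andP[_ vsg] := (QE v).1 Qv.
    exists t' => //; apply/andP; split => //; rewrite le_min tp' andbT -vt' //.
  move: td; rewrite le_min => /andP[tsg tpc].
  apply/(angE _).2; split.
    by apply: (ex_intro _ t); split => //; apply/(QE t); rewrite tsg (le_trans pa0 pt).
  by rewrite /Pset jl; exists t => //; apply/andP; split.
- exists a, ts; split => //.
  + by case/andP: tsI.
  + by case/andP: tsI.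
  + rewrite /= -/(g a) ga shK // rpar_phi //.
    by apply/andP; split; [exact: lexx|exact: ler01].
  + by rewrite /= -/(g ts) gts shK // rpar_phi // ge_min lexx.
Qed.

Lemma angI s k : ang s k !=set0 ->
  exists b, pa (s k) <= b <= pc (s k) /\
    ang s k = phi (pb (s k)) @` [set t | pa (s k) <= t <= b].
Proof.
elim: k => [_|k IH ne].
  exists (pc (s 0)); have [_ [? _]] := bp1 (s 0); rewrite lexx andbT; split => //.
  by rewrite ang0.
have [w Hw] := ne; have [y [m [angy _]]] := ang_down Hw.
have [b [bI eang]] := IH (ex_intro _ y angy).
have [d [dI eang' _]] := step bI eang ne.
by exists d.
Qed.

Lemma main_sec s n : ang s n !=set0 -> ang s n.+1 !=set0 ->
  forall A : K, ang s n `<=` P A ->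
  exists (i : L) (a b : R) (j : L) (c d : R),
    [/\ 0 <= a /\ a <= b /\ b <= 1, 0 <= c /\ c <= d /\ d <= 1,
        ang s n = phi i @` [set t | a <= t <= b],
        ang s n.+1 = phi j @` [set t | c <= t <= d] &
        pos_covers tau tauinv F phi 1 i a b j c d (pp A)].
Proof.
move=> ne ne' A sA.
have [b [/andP[ab bp] eang]] := angI ne.
have eA : A = s n.
  apply/eqP; apply: contrapT => /negP nA.
  have [y Hy] := ne; have := bp2 nA; rewrite -subset0 => /(_ y); apply.
  by split; [exact: sA|exact: ang_sub].
subst A.
have [d [/andP[cd dp] eang' pcov]] := step (introT andP (conj ab bp)) eang ne'.
have [a0 [_ p1]] := bp1 (s n); have [c0 [_ p1']] := bp1 (s n.+1).
exists (pb (s n)), (pa (s n)), b, (pb (s n.+1)), (pa (s n.+1)), d; split => //.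
- by split => //; split => //; exact: le_trans bp p1.
- by split => //; split => //; exact: le_trans dp p1'.
Qed.
End Main.

Unset Implicit Arguments.

Theorem mainTheorem11 (R : realType) (T : topologicalType) (h : R -> T)
  (tau tauinv : T -> T) (F : T -> T) (L : finType) (phi : L -> R -> T)
  (K : finType) (pb : K -> L) (pa pc : K -> R) (pl : K -> L) (pp : K -> int) :
  lifted_graph h tau tauinv ->
  continuous F ->
  (forall x, F (tau x) = tau (F x)) ->
  sun_like F h phi ->
  basic_partition tau tauinv F h phi pb pa pc pl pp ->
  forall (s : nat -> K) (n : nat),
    angle tau tauinv F h phi pb pa pc s n !=set0 ->
    angle tau tauinv F h phi pb pa pc s n.+1 !=set0 ->
  forall A : K,
    angle tau tauinv F h phi pb pa pc s n `<=` Pset phi pb pa pc A ->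
  exists (i : L) (a b : R) (j : L) (c d : R),
    [/\ 0 <= a /\ a <= b /\ b <= 1, 0 <= c /\ c <= d /\ d <= 1,
        angle tau tauinv F h phi pb pa pc s n = phi i @` [set t | a <= t <= b],
        angle tau tauinv F h phi pb pa pc s n.+1 = phi j @` [set t | c <= t <= d] &
        pos_covers tau tauinv F phi 1 i a b j c d (pp A)].
Proof.
move=> [[_ [_ hinj _]] [ctau ctauinv tauK tauinvK] tauh hc _] cF Ftau
  [[arcs _] phiN phicl phidisj sunX] [bp1 bp2 bp3 bp4 _] s n ne ne' A sA.
have hcomp : forall x, ~ range h x ->
    exists y, closure (compo h x) `&` range h = [set y].
  by move=> x nx; case: (hc x nx).
exact: (main_sec hinj tauK tauinvK ctau ctauinv tauh hcomp cF Ftau arcs phiN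
  phicl phidisj sunX bp1 bp2 bp3 bp4 ne ne' sA).
Qed.
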